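(* The approximation guarantee $(1/n)^n$ of the generalized student-proposing deferred acceptance algorithm with the HERF method is tight even when $|F|=2$: for every number of students $n$, the infimum over instances with $n$ students and $|F|=2$ of $\mathsf{ProS}(\mathsf{Alg}(\mathcal I);\mathcal I)/\max_\pi\mathsf{ProS}(\pi;\mathcal I)$ is at most $(1/n)^n$.
   Context: Model: students $N$ ($|N|=n$); colleges $M$, each college $c$ with positive integer capacity $x_c$ and strict preference $\succ_c$ over $N$; features $F$; utilities $u_s^f:M\to[0,1]$; for each student $s$ an independent distribution $\mu_s$ over weight vectors $w_s$ ($w_s^f\ge0$, $\sum_f w_s^f=1$). For realized $w_s$, $c\succeq_s^{w_s}c'$ iff $\sum_f w_s^fu_s^f(c)\ge\sum_f w_s^fu_s^f(c')$, strict version $\succ_s^{w_s}$; $\mathsf{null}$ ranked below any college. A matching $\pi$ gives each student at most one college and each college at most $x_c$ students; it is (weakly) stable for realized weights if no pair $(s,c)$ has $c\succ_s^{w_s}\pi(s)$ and either $|\pi(c)|<x_c$ or some $s'\in\pi(c)$ with $s\succ_c s'$. $\mathsf{ProS}(\pi;\mathcal I)$ = probability over independent $w_s\sim\mu_s$ that $\pi$ is stable. Generalized student-proposing DA: all students start unmatched with $R_s=\emptyset$; while some unmatched student $s$ has $R_s\ne M$, each such student proposes to $\mathsf{Next}(s,R_s)\notin R_s$; each college keeps its $x_c$ most preferred students among those it holds and its new proposers and rejects the rest (rejected students add the college to $R_s$ and become unmatched). HERF: $\mathsf{Next}$ returns a college in $\arg\max_{c\notin R_s}\Pr[c\succeq_s^{w_s}c'\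 \forall c'\notin R_s,c'\ne c]$. *)

(* Defs.v *)
From HB Require Import structures.
From mathcomp Require Import all_boot all_order all_algebra.
From mathcomp Require Import perm reals.
Set Implicit Arguments. Unset Strict Implicit. Unset Printing Implicit Defensive.
Import Order.TTheory GRing.Theory Num.Theory.
Local Open Scope ring_scope.

(* Students are 'I_n, colleges are 'I_m, features are 'I_2 (|F| = 2).
   Each student's weight distribution mu_s is finitely supported: it puts
   probability [pr s k] on the weight vector [wt s k] (k : 'I_K). *)
Record instance (R : realType) (n m K : nat) := Instance {
  cap : 'I_m -> nat;
  cap_pos : forall c, (0 < cap c)%N;
  (* college c prefers s to s' iff crank c s < crank c s' (strict total order) *)
  crank : 'I_m -> {perm 'I_n};
  util : 'I_n -> 'I_2 -> 'I_m -> R;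
  util_01 : forall s f c, 0 <= util s f c <= 1;
  wt : 'I_n -> 'I_K -> 'I_2 -> R;
  wt_ge0 : forall s k f, 0 <= wt s k f;
  wt_sum1 : forall s k, \sum_(f < 2) wt s k f = 1;
  pr : 'I_n -> 'I_K -> R;
  pr_ge0 : forall s k, 0 <= pr s k;
  pr_sum1 : forall s, \sum_(k < K) pr s k = 1
}.

Section Model.
Variables (R : realType) (n m K : nat) (I : instance R n m K).

Definition cprefers (c : 'I_m) (s s' : 'I_n) : bool :=
  (crank I c s < crank I c s')%N.

Definition uval (s : 'I_n) (w : 'I_2 -> R) (c : 'I_m) : R :=
  \sum_(f < 2) w f * util I s f c.

(* weak preference over colleges-or-null (None = null, ranked below all) *)
Definition sweak (s : 'I_n) (w : 'I_2 -> R) (a b : option 'I_m) : bool :=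
  match a, b with
  | _, None => true
  | None, Some _ => false
  | Some c, Some c' => uval s w c' <= uval s w c
  end.

Definition sstrict (s : 'I_n) (w : 'I_2 -> R) (a b : option 'I_m) : bool :=
  match a, b with
  | None, _ => false
  | Some _, None => true
  | Some c, Some c' => uval s w c' < uval s w c
  end.

Definition matching := {ffun 'I_n -> option 'I_m}.

Definition assigned (pi : matching) (c : 'I_m) : {set 'I_n} :=
  [set s | pi s == Some c].

Definition is_matching (pi : matching) : bool :=
  [forall c, (#|assigned pi c| <= cap I c)%N].

(* a realized weight profile: student s draws support point k s *)
Definition profile := {ffun 'I_n -> 'I_K}.

Definition stable (pi : matching) (k : profile) : bool :=
  [forall s, forall c,
     ~~ (sstrict s (wt I s (k s)) (Some c) (pi s) &&
         ((#|assigned pi c| < cap I c)%N ||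
          [exists s', (pi s' == Some c) && cprefers c s s']))].

Definition prob_profile (k : profile) : R := \prod_(s < n) pr I s (k s).

Definition ProS (pi : matching) : R :=
  \sum_(k : profile) prob_profile k * (stable pi k)%:R.

Definition MaxProS : R :=
  \big[Num.max/0]_(pi : matching | is_matching pi) ProS pi.

Definition herf_score (s : 'I_n) (Rs : {set 'I_m}) (c : 'I_m) : R :=
  \sum_(k < K) pr I s k *
    [forall c', (c' \notin Rs) ==> (c' != c) ==>
                 sweak s (wt I s k) (Some c) (Some c')]%:R.

(* Next : a HERF-consistent choice (any tie-breaking) *)
Definition HERF (Next : 'I_n -> {set 'I_m} -> option 'I_m) : Prop :=
  forall s Rs, Rs != setT ->
    exists c, [/\ Next s Rs = Some c, c \notin Rs &
                  forall c', c' \notin Rs -> herf_score s Rs c' <= herf_score s Rs c].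

(* DA state: rejection sets R_s and current tentative assignment *)
Definition state := ({ffun 'I_n -> {set 'I_m}} * matching)%type.

Definition init_state : state := ([ffun _ => set0], [ffun _ => None]).

Section Step.
Variable Next : 'I_n -> {set 'I_m} -> option 'I_m.

(* college that s is held by or proposes to in this round *)
Definition cand (st : state) (s : 'I_n) : option 'I_m :=
  match st.2 s with
  | Some c => Some c
  | None => if st.1 s != setT then Next s (st.1 s) else None
  end.

Definition cands (st : state) (c : 'I_m) : {set 'I_n} :=
  [set s | cand st s == Some c].

Definition kept (st : state) (c : 'I_m) (s : 'I_n) : bool :=
  (#|[set s' in cands st c | cprefers c s' s]| < cap I c)%N.

Definition step (st : state) : state :=
  ([ffun s => match cand st s with
              | Some c => if kept st c s then st.1 s else c |: st.1 s
              | None => st.1 s end],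
   [ffun s => match cand st s with
              | Some c => if kept st c s then Some c else None
              | None => None end]).

Definition terminal (st : state) : bool :=
  [forall s, ~~ ((st.2 s == None) && (st.1 s != setT))].

Definition DA_output (pi : matching) : Prop :=
  exists t, terminal (iter t step init_state) /\ (iter t step init_state).2 = pi.
End Step.

End Model.

(* Main.v *)
Require Import Defs.
From HB Require Import structures.
From mathcomp Require Import all_boot all_order all_algebra.
From mathcomp Require Import perm reals.
From mathcomp Require Import ring lra.
Import Order.TTheory GRing.Theory Num.Theory.
Local Open Scope ring_scope.
Set Implicit Arguments. Unset Strict Implicit.

Section Constr.
Variable R : realType.
Variable n' : nat.
Local Notation N := (n'.+1).
Variable d : R.
Hypothesis d0 : 0 < d.
Hypothesis d1 : d <= 1.

Definition pt (s : 'I_N) (k : 'I_N.+1) : 'I_N := insubd s (val k).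
Definition tt (c : 'I_N) : R := (val c)%:R / N%:R.
Definition myutil (s : 'I_N) (f : 'I_2) (c : 'I_N) : R :=
  if (val f == 0)%N then (1 + 2 * tt c - tt c ^+ 2) / 2 else (1 - tt c ^+ 2) / 2.
Definition mywt (s : 'I_N) (k : 'I_N.+1) (f : 'I_2) : R :=
  if (val f == 0)%N then tt (pt s k) else 1 - tt (pt s k).
Definition mypr (s : 'I_N) (k : 'I_N.+1) : R :=
  if (val k < N)%N then (1 - d) / N%:R else d.
Definition mycrank (c : 'I_N) : {perm 'I_N} := perm (@addIr _ (ord_max - c)).

Lemma Npos : (0 : R) < N%:R. Proof. by rewrite ltr0n. Qed.
Lemma Nge1 : (1 : R) <= N%:R. Proof. by rewrite ler1n. Qed.

Lemma tt01 c : 0 <= tt c <= 1.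
Proof.
rewrite /tt divr_ge0 ?ler0n //= ler_pdivrMr ?Npos // mul1r ler_nat.
exact: ltnW (ltn_ord c).
Qed.

Lemma cap_pos' : forall c : 'I_N, (0 < (fun _ => 1%N) c)%N. Proof. by []. Qed.

Lemma util01 s f c : 0 <= myutil s f c <= 1.
Proof.
rewrite /myutil; have /andP[h0 h1] := tt01 c.
have h2 : tt c ^+ 2 <= tt c by rewrite expr2; nra.
have h3 : 0 <= (1 - tt c) ^+ 2 by apply: sqr_ge0.
have h4 : 0 <= tt c ^+ 2 by apply: sqr_ge0.
move: h3; rewrite expr2 => h3.
case: ifP => _; apply/andP; split; rewrite -?expr2 in h3 *; nra.
Qed.

Lemma wt_ge0' s k f : 0 <= mywt s k f.
Proof. rewrite /mywt; have /andP[h0 h1] := tt01 (pt s k); case: ifP => _; lra. Qed.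

Lemma wt_sum1' s k : \sum_(f < 2) mywt s k f = 1.
Proof. by rewrite !big_ord_recl big_ord0 /mywt /=; lra. Qed.

Lemma pr_ge0' s k : 0 <= mypr s k.
Proof.
rewrite /mypr; case: ifP => _; last (move: d0; rewrite lt_def => /andP[_ ->] //).
by rewrite divr_ge0 ?ler0n // subr_ge0.
Qed.

Lemma pr_sum1' s : \sum_(k < N.+1) mypr s k = 1.
Proof.
rewrite big_ord_recr /=.
have -> : mypr s ord_max = d by rewrite /mypr /= ltnn.
rewrite (eq_bigr (fun _ => (1 - d) / N%:R)); last first.
  by move=> i _; rewrite /mypr /= ltn_ord.
rewrite sumr_const card_ord -[_ *+ N]mulr_natr divfK; first by rewrite subrK.
by rewrite pnatr_eq0.
Qed.

Definition myI : instance R N N N.+1 :=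
  @Instance R N N N.+1 (fun _ => 1%N) cap_pos' mycrank myutil util01 mywt wt_ge0' wt_sum1'
    mypr pr_ge0' pr_sum1'.


Lemma uvalE s k c : uval myI s (wt myI s k) c =
  (1 + tt (pt s k) ^+ 2 - (tt (pt s k) - tt c) ^+ 2) / 2.
Proof. rewrite /uval /= !big_ord_recl big_ord0 /mywt /myutil /=. by field. Qed.

Lemma tt_inj : injective tt.
Proof.
move=> a b /eqP; rewrite /tt (inj_eq (mulIf _)); last by rewrite invr_eq0 pnatr_eq0.
by rewrite eqr_nat => /eqP /val_inj.
Qed.

Lemma sq_pos (x y : R) : x != y -> 0 < (x - y) ^+ 2.
Proof. by move=> h; rewrite exprn_even_gt0 //= subr_eq0 h. Qed.

Lemma top_iff s k c :
  [forall c', (c' \notin set0) ==> (c' != c) ==>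
     sweak myI s (wt myI s k) (Some c) (Some c')] = (c == pt s k).
Proof.
apply/forallP/eqP => [H|->].
  apply/eqP/negPn/negP => hne.
  have := H (pt s k); rewrite in_set0 /= eq_sym hne /= !uvalE subrr expr0n /=.
  have h : tt (pt s k) != tt c by rewrite (inj_eq tt_inj) eq_sym.
  have := sq_pos h. lra.
move=> c'; rewrite in_set0 /=; apply/implyP => _.
rewrite !uvalE subrr expr0n /=.
have := sqr_ge0 (tt (pt s k) - tt c'). lra.
Qed.


Lemma pt_max s : pt s ord_max = s.
Proof. by apply: val_inj; rewrite /pt val_insubd /= ltnn. Qed.

Lemma pt_widen s (i : 'I_N) : pt s (widen_ord (leqnSn N) i) = i.
Proof. by apply: val_inj; rewrite /pt val_insubd /= ltn_ord. Qed.

Lemma scoreE s c : \sum_(k < N.+1) mypr s k * (c == pt s k)%:R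
   = (1 - d) / N%:R + d * (c == s)%:R.
Proof.
rewrite big_ord_recr /= pt_max.
have -> : mypr s ord_max = d by rewrite /mypr /= ltnn.
rewrite (eq_bigr (fun i : 'I_N => (1 - d) / N%:R * (c == i)%:R)); last first.
  by move=> i _; rewrite pt_widen /mypr /= ltn_ord.
congr (_ + _).
rewrite (bigD1 c) //= eqxx mulr1 big1 ?addr0 // => i hi.
by rewrite eq_sym (negbTE hi) mulr0.
Qed.

Lemma herf_scoreE s c : herf_score myI s set0 c = (1 - d) / N%:R + d * (c == s)%:R.
Proof.
rewrite /herf_score -scoreE; apply: eq_bigr => k _.
by rewrite top_iff.
Qed.

Lemma HERF_next Next : HERF myI Next -> forall s, Next s set0 = Some s.
Proof.
move=> H s.
have hT : (set0 : {set 'I_N}) != setT.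
  by apply/eqP => /setP /(_ ord0); rewrite !inE.
case: (H s _ hT) => c [-> _ Hc].
have := Hc s; rewrite in_set0 => /(_ isT).
rewrite !herf_scoreE eqxx.
case: eqP => [->//|_]; rewrite mulr0 mulr1 lerD2l => h; by move: (lt_geF d0); rewrite h.
Qed.

Lemma crank_self c : mycrank c c = ord_max.
Proof. by rewrite permE /= addrC subrK. Qed.

Lemma crank_lt c s : s != c -> (mycrank c s < mycrank c c)%N.
Proof.
move=> h.
have h' : mycrank c s != mycrank c c by rewrite (inj_eq perm_inj).
rewrite crank_self in h' *.
rewrite ltn_neqAle -ltnS ltn_ord andbT.
exact: h'.
Qed.

Definition pistar : matching N N := [ffun s => Some (s + ord_max)].
Definition pid : matching N N := [ffun s => Some s].

Lemma crank_pistar c s' : pistar s' = Some c -> mycrank c s' = 0.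
Proof. by rewrite ffunE => -[<-]; rewrite permE /= opprD addrCA addNKr subrr. Qed.

Lemma pistar_matching : is_matching myI pistar.
Proof.
apply/forallP => c /=.
have -> : (1 = #|[set (c - ord_max)%R]|)%N by rewrite cards1.
apply: subset_leq_card; apply/subsetP => s; rewrite !inE ffunE => /eqP [<-].
by rewrite addrK.
Qed.

Lemma stable_pistar k : stable myI pistar k.
Proof.
apply/forallP => s; apply/forallP => c.
rewrite negb_and; apply/orP; right.
rewrite negb_or; apply/andP; split.
  rewrite /= -leqNgt; apply/card_gt0P; exists (c - ord_max)%R.
  by rewrite inE ffunE subrK.
apply/existsP => -[s' /andP [/eqP h]].
by rewrite /cprefers /= (crank_pistar h).
Qed.

Lemma ProS_pistar : ProS myI pistar = 1.
Proof.
rewrite /ProS; under eq_bigr do rewrite stable_pistar mulr1.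
rewrite /prob_profile /=.
rewrite -(bigA_distr_bigA (fun s k => mypr s k)) /=.
by rewrite big1 // => s _; rewrite pr_sum1'.
Qed.

Lemma le_bigmax_gen (T : finType) (P : pred T) (F : T -> R) x :
  P x -> F x <= \big[Num.max/0]_(i | P i) F i.
Proof.
move=> Px.
have : x \in index_enum T by rewrite mem_index_enum.
elim: (index_enum T) => // y r IH.
rewrite inE big_cons; case/orP => [/eqP <-| xr].
  by rewrite Px le_max lexx.
by case: (P y); rewrite ?le_max IH ?orbT.
Qed.

Lemma MaxProS_ge1 : 1 <= MaxProS myI.
Proof.
rewrite -ProS_pistar /MaxProS.
exact: (le_bigmax_gen (fun pi => ProS myI pi) pistar_matching).
Qed.

Definition st1 : state N N := ([ffun _ => set0], pid).

Lemma step_st Next st : st.1 = [ffun _ => set0] ->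
  (forall s, cand Next st s = Some s) -> step myI Next st = st1.
Proof.
move=> H1 Hc.
have Hk : forall s, kept myI Next st s s.
  move=> s; rewrite /kept /=.
  suff -> : [set s' in cands Next st s | cprefers myI s s' s] = set0 by rewrite cards0.
  apply/setP => s'; rewrite !inE Hc /cprefers.
  case: eqP => [[->]|//]; by rewrite ltnn.
rewrite /step /st1; congr pair; apply/ffunP => s; rewrite !ffunE Hc Hk //.
by rewrite H1 ffunE.
Qed.

Lemma iter_st1 Next : (forall s, Next s set0 = Some s) ->
  forall t, iter t.+1 (step myI Next) (init_state N N) = st1.
Proof.
move=> HN; elim=> [|t IH].
  apply: step_st => [//|s]; rewrite /cand /= ffunE /= ffunE HN.
  have -> : (set0 : {set 'I_N}) != setT.
    by apply/eqP => /setP /(_ ord0); rewrite !inE.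
  by [].
rewrite iterS IH; apply: step_st => [//|s].
by rewrite /cand /= ffunE.
Qed.

Lemma DA_pid Next : HERF myI Next -> forall pi, DA_output myI Next pi -> pi = pid.
Proof.
move=> /HERF_next HN pi [[|t] [Ht <-]].
  move/forallP: Ht => /(_ ord0); rewrite /= !ffunE /=.
  have -> : (set0 : {set 'I_N}) != setT.
    by apply/eqP => /setP /(_ ord0); rewrite !inE.
  by [].
by rewrite iter_st1.
Qed.

Lemma stable_pid k : stable myI pid k -> forall s, s == pt s (k s).
Proof.
move=> H s; apply/negPn/negP => hne.
move/forallP: H => /(_ s) /forallP /(_ (pt s (k s))).
move/negP; apply; apply/andP; split.
  rewrite ffunE /= !uvalE subrr expr0n /=.
  have h : tt (pt s (k s)) != tt s by rewrite (inj_eq tt_inj) eq_sym.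
  have := sq_pos h; lra.
apply/orP; right; apply/existsP; exists (pt s (k s)).
by rewrite ffunE eqxx /= /cprefers /= crank_lt.
Qed.

Lemma ProS_pid : ProS myI pid <= ((1 - d) / N%:R + d) ^+ N.
Proof.
rewrite /ProS /prob_profile /=.
apply: (@le_trans _ _ (\sum_(k : profile N N.+1)
    \prod_(s < N) (mypr s (k s) * (s == pt s (k s))%:R))).
  apply: ler_sum => k _.
  case: (boolP (stable myI pid k)) => h.
    rewrite mulr1.
    have -> : \prod_(s < N) (mypr s (k s) * (s == pt s (k s))%:R) =
              \prod_(s < N) mypr s (k s).
      by apply: eq_bigr => s _; rewrite (stable_pid h s) mulr1.
    by [].
  rewrite mulr0; apply: prodr_ge0 => s _.
  by rewrite mulr_ge0 ?ler0n ?pr_ge0'.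
rewrite -(bigA_distr_bigA (fun s k => mypr s k * (s == pt s k)%:R)) /=.
under eq_bigr do rewrite scoreE eqxx mulr1.
by rewrite prodr_const card_ord.
Qed.

End Constr.

Lemma pow_bound (R : realType) (a b e : R) (j : nat) :
  0 <= a <= 1 -> 0 <= b <= 1 -> b <= a + e -> 0 <= e ->
  b ^+ j <= a ^+ j + j%:R * e.
Proof.
move=> /andP[a0 a1] /andP[b0 b1] hb he.
elim: j => [|j IH]; first by rewrite !expr0 mul0r addr0.
have x0 : 0 <= a ^+ j by apply: exprn_ge0.
have x1 : a ^+ j <= 1 by apply: exprn_ile1.
have y0 : 0 <= b ^+ j by apply: exprn_ge0.
rewrite !exprS -natr1.
move: IH; set x := a ^+ j; set y := b ^+ j; set J := j%:R => IH.
have J0 : 0 <= J by rewrite /J ler0n.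
have h1 : b * y <= b * (x + J * e) by rewrite ler_wpM2l.
have h2 : b * (x + J * e) <= (a + e) * x + J * e.
  have : b * (J * e) <= J * e by rewrite ler_piMl // mulr_ge0.
  have : b * x <= (a + e) * x by rewrite ler_wpM2r.
  lra.
have h3 : e * x <= e by rewrite ler_piMr.
have -> : (J + 1) * e = J * e + e by rewrite mulrDl mul1r.
rewrite mulrDl in h2; lra.
Qed.

Theorem proposition3 (R : realType) (n : nat) (hn : (0 < n)%N)
    (eps : R) (heps : 0 < eps) :
  exists (m K : nat) (I : instance R n m K),
    0 < MaxProS I /\
    forall Next : 'I_n -> {set 'I_m} -> option 'I_m, HERF I Next ->
    forall pi : matching n m, DA_output I Next pi ->
      ProS I pi <= ((1 / n%:R) ^+ n + eps) * MaxProS I.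
Proof.
case: n hn => // n' _.
set N := n'.+1.
have Np : (0 : R) < N%:R by rewrite ltr0n.
set d : R := Num.min (eps / N%:R) 1.
have d0 : 0 < d by rewrite lt_min ltr01 andbT divr_gt0.
have d1 : d <= 1 by rewrite ge_min lexx orbT.
have de : d <= eps / N%:R by rewrite ge_min lexx.
exists N, N.+1, (myI n' d0 d1); split.
  exact: lt_le_trans ltr01 (MaxProS_ge1 n' d0 d1).
move=> Next HN pi Hpi.
rewrite (DA_pid HN Hpi).
have hM := MaxProS_ge1 n' d0 d1.
have Ne : N%:R * d <= eps by move: de; rewrite ler_pdivlMr // mulrC.
have hb : ((1 - d) / N%:R + d) ^+ N <= (1 / N%:R) ^+ N + N%:R * d.
  apply: pow_bound.
  - by rewrite divr_ge0 ?ler01 ?ler0n //= ler_pdivrMr // mul1r ler1n.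
  - apply/andP; split.
      by apply: addr_ge0; [apply: divr_ge0; [rewrite subr_ge0 | rewrite ler0n] | exact: ltW].
    have : (1 - d) / N%:R <= 1 - d.
      by rewrite ler_pdivrMr // ler_peMr ?subr_ge0 // ler1n.
    lra.
  - rewrite lerD2r ler_pM2r ?invr_gt0 //; lra.
  - exact: ltW.
have hp := ProS_pid n' d0 d1.
have c0 : 0 <= (1 / N%:R) ^+ N + eps.
  by rewrite addr_ge0 ?exprn_ge0 ?divr_ge0 ?ler01 ?ler0n ?ltW.
set M := MaxProS _ in hM *.
set P := ProS _ _ in hp *.
nra.
Qed.
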